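(* Let $(\mathcal{E},[\cdot,\cdot]_{\mathcal{E}})$ be a Leibniz algebra over a field $\mathbb{K}$ and $\omega:\mathcal{E}\otimes\mathcal{E}\to\mathbb{K}$ a bilinear map such that $\mathbb{K}\oplus\mathcal{E}$ with bracket $[(a,x),(b,y)]_\omega=(\omega(x,y),[x,y]_{\mathcal{E}})$ is a Leibniz algebra (a central extension of $\mathcal{E}$ by $\mathbb{K}$). Then $R^{Lei}:(\mathbb{K}\oplus\mathcal{E})^{\otimes2}\to(\mathbb{K}\oplus\mathcal{E})^{\otimes2}$, $R^{Lei}((a,x)\otimes(b,y))=(b,y)\otimes(a,x)+(1,0)\otimes(\omega(x,y),[x,y]_{\mathcal{E}})$, is a solution of the Yang-Baxter equation. Moreover, if $\omega_1,\omega_2$ are two such maps and the central extensions $(\mathbb{K}\oplus\mathcal{E},[\cdot,\cdot]_{\omega_1})$ and $(\mathbb{K}\oplus\mathcal{E},[\cdot,\cdot]_{\omega_2})$ are isomorphic via $\theta$, then the induced solutions $R^{Lei}_1,R^{Lei}_2$ satisfy $(\theta\otimes\theta)R^{Lei}_1=R^{Lei}_2(\theta\otimes\theta)$.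
   Context: A (right) Leibniz algebra is a vector space with bilinear bracket satisfying $[[x,y],z]=[[x,z],y]+[x,[y,z]]$. Isomorphism of central extensions: a Leibniz algebra homomorphism $\theta:(\mathbb{K}\oplus\mathcal{E},[\cdot,\cdot]_{\omega_1})\to(\mathbb{K}\oplus\mathcal{E},[\cdot,\cdot]_{\omega_2})$ with $\theta\circ i=i$ and $p\circ\theta=p$, where $i(a)=(a,0)$ and $p(a,x)=x$. A solution of the Yang-Baxter equation on $V$ is an invertible linear $R:V\otimes V\to V\otimes V$ with $(R\otimes\mathrm{Id})(\mathrm{Id}\otimes R)(R\otimes\mathrm{Id})=(\mathrm{Id}\otimes R)(R\otimes\mathrm{Id})(\mathrm{Id}\otimes R)$. *)

(* Defs.v *)
From HB Require Import structures.
From mathcomp Require Import all_boot all_algebra.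
Set Implicit Arguments. Unset Strict Implicit. Unset Printing Implicit Defensive.
Import GRing.Theory.
Local Open Scope ring_scope.

Section Defs.
Variable K : fieldType.

Definition bilinear_map (A B C : lmodType K) (f : A -> B -> C) : Prop :=
  (forall (a : K) x x' y, f (a *: x + x') y = a *: f x y + f x' y) /\
  (forall (a : K) x y y', f x (a *: y + y') = a *: f x y + f x y').

Definition trilinear_map (A B C D : lmodType K) (f : A -> B -> C -> D) : Prop :=
  (forall (a : K) x x' y z, f (a *: x + x') y z = a *: f x y z + f x' y z) /\
  (forall (a : K) x y y' z, f x (a *: y + y') z = a *: f x y z + f x y' z) /\
  (forall (a : K) x y z z', f x y (a *: z + z') = a *: f x y z + f x y z').

Definition leibniz_algebra (L : lmodType K) (br : L -> L -> L) : Prop :=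
  bilinear_map br /\
  forall x y z, br (br x y) z = br (br x z) y + br x (br y z).

Definition ext_space (E : lmodType K) : lmodType K := (K^o * E)%type.

Definition ce_bracket (E : lmodType K) (omega : E -> E -> K^o)
  (br : E -> E -> E) (p q : ext_space E) : ext_space E :=
  ((omega p.2 q.2 : K^o), br p.2 q.2).

(** Tensor powers V(x)V and V(x)V(x)V, modelled as formal sums of pure tensors
    (scalars are absorbed into the first factor), modulo the relation
    "every bilinear (resp. trilinear) map into every K-vector space agrees on
    them" -- i.e. the quotient of the free module by the bilinearity
    relations, which is the tensor product by its universal property. *)
Definition tens2 (V : lmodType K) := seq (V * V)%type.
Definition tens3 (V : lmodType K) := seq (V * V * V)%type.

Definition tens2_eq (V : lmodType K) (s t : tens2 V) : Prop :=
  forall (U : lmodType K) (f : V -> V -> U), bilinear_map f ->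
    \sum_(p <- s) f p.1 p.2 = \sum_(p <- t) f p.1 p.2.

Definition tens3_eq (V : lmodType K) (s t : tens3 V) : Prop :=
  forall (U : lmodType K) (f : V -> V -> V -> U), trilinear_map f ->
    \sum_(p <- s) f p.1.1 p.1.2 p.2 = \sum_(p <- t) f p.1.1 p.1.2 p.2.

Definition scale2 (V : lmodType K) (a : K) (s : tens2 V) : tens2 V :=
  [seq (a *: p.1, p.2) | p <- s].

(** A linear endomorphism of V(x)V is given by its values r u v on pure
    tensors u(x)v, which must be bilinear in (u,v) (modulo tensor equality). *)
Definition tens2_endo (V : lmodType K) (r : V -> V -> tens2 V) : Prop :=
  (forall (a : K) u u' v,
      tens2_eq (r (a *: u + u') v) (scale2 a (r u v) ++ r u' v)) /\
  (forall (a : K) u v v',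
      tens2_eq (r u (a *: v + v')) (scale2 a (r u v) ++ r u v')).

Definition ext2 (V : lmodType K) (r : V -> V -> tens2 V) (s : tens2 V) : tens2 V :=
  flatten [seq r p.1 p.2 | p <- s].

Definition lift12 (V : lmodType K) (r : V -> V -> tens2 V) (s : tens3 V) : tens3 V :=
  flatten [seq [seq (q.1, q.2, p.2) | q <- r p.1.1 p.1.2] | p <- s].

Definition lift23 (V : lmodType K) (r : V -> V -> tens2 V) (s : tens3 V) : tens3 V :=
  flatten [seq [seq (p.1.1, q.1, q.2) | q <- r p.1.2 p.2] | p <- s].

Definition YBE_solution (V : lmodType K) (r : V -> V -> tens2 V) : Prop :=
  tens2_endo r /\
  (exists r' : V -> V -> tens2 V, tens2_endo r' /\
     forall u v, tens2_eq (ext2 r' (r u v)) [:: (u, v)] /\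
                 tens2_eq (ext2 r (r' u v)) [:: (u, v)]) /\
  (forall s : tens3 V,
     tens3_eq (lift12 r (lift23 r (lift12 r s)))
              (lift23 r (lift12 r (lift23 r s)))).

Definition RLei (E : lmodType K) (omega : E -> E -> K^o) (br : E -> E -> E)
  (p q : ext_space E) : tens2 (ext_space E) :=
  [:: (q, p); (((1 : K^o), (0 : E)) : ext_space E, ce_bracket omega br p q)].

(** Isomorphism of central extensions: a Leibniz algebra homomorphism
    theta with theta o i = i and p o theta = p. *)
Definition ce_iso (E : lmodType K) (br : E -> E -> E) (omega1 omega2 : E -> E -> K^o)
  (theta : ext_space E -> ext_space E) : Prop :=
  (forall (a : K) x y, theta (a *: x + y) = a *: theta x + theta y) /\
  (forall x y, theta (ce_bracket omega1 br x y) =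
               ce_bracket omega2 br (theta x) (theta y)) /\
  (forall a : K, theta ((a : K^o), (0 : E)) = ((a : K^o), (0 : E))) /\
  (forall x, (theta x).2 = x.2).

Definition map2 (V : lmodType K) (theta : V -> V) (s : tens2 V) : tens2 V :=
  [seq (theta p.1, theta p.2) | p <- s].

End Defs.

(* Main.v *)
Require Import Defs.
From HB Require Import structures.
From mathcomp Require Import all_boot all_algebra.
Import GRing.Theory.
Local Open Scope ring_scope.

Lemma dbl0 (V : zmodType) (x : V) : x = x + x -> x = 0.
Proof. by move=> H; apply: (@addrI _ x); rewrite addr0 -H. Qed.

Section S.
Variable K : fieldType.

Lemma bil0l {A B C : lmodType K} {f : A -> B -> C} : bilinear_map f -> forall y, f 0 y = 0.
Proof. move=> [H _] y; have := H 1 0 0 y; rewrite !scale1r addr0; exact: dbl0. Qed.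
Lemma bil0r {A B C : lmodType K} {f : A -> B -> C} : bilinear_map f -> forall x, f x 0 = 0.
Proof. move=> [_ H] x; have := H 1 x 0 0; rewrite !scale1r addr0; exact: dbl0. Qed.
Lemma bilDl {A B C : lmodType K} {f : A -> B -> C} : bilinear_map f -> forall x x' y, f (x + x') y = f x y + f x' y.
Proof. by move=> [H _] x x' y; rewrite -[x]scale1r H !scale1r. Qed.
Lemma bilDr {A B C : lmodType K} {f : A -> B -> C} : bilinear_map f -> forall x y y', f x (y + y') = f x y + f x y'.
Proof. by move=> [_ H] x y y'; rewrite -[y]scale1r H !scale1r. Qed.
Lemma bilZl {A B C : lmodType K} {f : A -> B -> C} : bilinear_map f -> forall a x y, f (a *: x) y = a *: f x y.
Proof. by move=> Hf a x y; have [H _] := Hf; rewrite -[a *: x]addr0 H (bil0l Hf) addr0. Qed.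
Lemma bilZr {A B C : lmodType K} {f : A -> B -> C} : bilinear_map f -> forall a x y, f x (a *: y) = a *: f x y.
Proof. by move=> Hf a x y; have [_ H] := Hf; rewrite -[a *: y]addr0 H (bil0r Hf) addr0. Qed.
Lemma bilNl {A B C : lmodType K} {f : A -> B -> C} : bilinear_map f -> forall x y, f (- x) y = - f x y.
Proof. by move=> Hf x y; rewrite -scaleN1r (bilZl Hf) scaleN1r. Qed.
Lemma bilNr {A B C : lmodType K} {f : A -> B -> C} : bilinear_map f -> forall x y, f x (- y) = - f x y.
Proof. by move=> Hf x y; rewrite -scaleN1r (bilZr Hf) scaleN1r. Qed.

Lemma tri0_2 {A B C D : lmodType K} {f : A -> B -> C -> D} : trilinear_map f -> forall x z, f x 0 z = 0.
Proof. move=> [_ [H _]] x z; have := H 1 x 0 0 z; rewrite !scale1r addr0; exact: dbl0. Qed.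
Lemma tri0_3 {A B C D : lmodType K} {f : A -> B -> C -> D} : trilinear_map f -> forall x y, f x y 0 = 0.
Proof. move=> [_ [_ H]] x y; have := H 1 x y 0 0; rewrite !scale1r addr0; exact: dbl0. Qed.
Lemma triD3 {A B C D : lmodType K} {f : A -> B -> C -> D} : trilinear_map f -> forall x y z z', f x y (z + z') = f x y z + f x y z'.
Proof. by move=> [_ [_ H]] x y z z'; rewrite -[z]scale1r H !scale1r. Qed.

Lemma lift12_cat (V : lmodType K) r (s1 s2 : tens3 V) : lift12 r (s1 ++ s2) = lift12 r s1 ++ lift12 r s2.
Proof. by rewrite /lift12 map_cat flatten_cat. Qed.
Lemma lift23_cat (V : lmodType K) r (s1 s2 : tens3 V) : lift23 r (s1 ++ s2) = lift23 r s1 ++ lift23 r s2.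
Proof. by rewrite /lift23 map_cat flatten_cat. Qed.

Lemma YBE_gen (V : lmodType K) (B : V -> V -> V) (c : V) :
  bilinear_map B -> (forall x y z, B (B x y) z = B (B x z) y + B x (B y z)) ->
  (forall q, B c q = 0) -> (forall q, B q c = 0) ->
  YBE_solution (fun p q => [:: (q, p); (c, B p q)]).
Proof.
move=> HB HL Hc1 Hc2; split; [|split].
- split=> a u u' v U f Hf; rewrite big_cat /= !big_cons !big_nil !addr0.
  + by rewrite /= (bilDr Hf) (bilZr Hf) (bilDl HB) (bilZl HB) (bilDr Hf) (bilZr Hf) !(bilZl Hf) addrACA.
  + by rewrite /= (bilDl Hf) (bilDr HB) (bilZr HB) (bilDr Hf) (bilZr Hf) !(bilZl Hf) addrACA.
- exists (fun p q => [:: (q, p); (- B q p, c)]); split.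
  + split=> a u u' v U f Hf; rewrite big_cat /= !big_cons !big_nil !addr0.
    * by rewrite /= (bilDr Hf) (bilZr Hf) (bilDr HB) (bilZr HB) opprD (bilDl Hf) -scalerN !(bilZl Hf) addrACA.
    * by rewrite /= (bilDl Hf) (bilZl Hf) (bilDl HB) (bilZl HB) opprD (bilDl Hf) -scalerN !(bilZl Hf) addrACA.
  + move=> u v; split=> U f Hf; rewrite /ext2 /= !big_cons !big_nil /= !Hc2 ?oppr0 ?(bil0l Hf) ?(bil0r Hf).
    * by rewrite (bilNl Hf) !addr0 addNr addr0.
    * by rewrite (bilNr Hf) !addr0 addrN addr0.
- move=> s U f Hf; elim: s => [|[[u v] w] s IH] //.
  rewrite -cat1s !(lift12_cat, lift23_cat) !big_cat IH /=; congr (_ + _).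
  rewrite !big_cons !big_nil !addr0.
  rewrite /= !Hc2 !Hc1 (bil0l HB) !(tri0_2 Hf) !(tri0_3 Hf) !addr0 ?add0r HL (triD3 Hf).
  by rewrite [LHS](AC (3*(1*2)) ((1*4)*(3*5)*(2*6))).
Qed.


End S.

Theorem theorem5p1 (K : fieldType) (E : lmodType K) (br : E -> E -> E) :
  leibniz_algebra br ->
  (forall omega : E -> E -> K^o,
     bilinear_map omega ->
     leibniz_algebra (ce_bracket omega br) ->
     YBE_solution (RLei omega br)) /\
  (forall omega1 omega2 : E -> E -> K^o,
     bilinear_map omega1 -> bilinear_map omega2 ->
     leibniz_algebra (ce_bracket omega1 br) ->
     leibniz_algebra (ce_bracket omega2 br) ->
     forall theta : ext_space E -> ext_space E,
       ce_iso br omega1 omega2 theta ->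
       forall s : tens2 (ext_space E),
         tens2_eq (map2 theta (ext2 (RLei omega1 br) s))
                  (ext2 (RLei omega2 br) (map2 theta s))).
Proof.
move=> Hbr; split.
- move=> omega Hom [HB HL].
  apply: (@YBE_gen K (ext_space E) (ce_bracket omega br) ((1 : K^o), (0 : E)) HB HL).
  + move=> q; exact: (bil0l _ HB q).
  + move=> q; exact: (bil0r _ HB q).
- move=> o1 o2 _ _ _ _ theta [_ [Hth [Hi _]]] s.
  have -> : map2 theta (ext2 (RLei o1 br) s) = ext2 (RLei o2 br) (map2 theta s).
    elim: s => [|[p q] s IH] //.
    rewrite /map2 /ext2 /= in IH *.
    by rewrite IH Hth Hi.
  by move=> U f _.
Qed.
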